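(* Let $0\le N_n\le n$ be integers with $N_n/n\to1$ and $D_n=n-N_n\to\infty$. Let $R_n=n/D_n$ and define, for $0\le k\le D_n$, $$\tilde f_{k,n}=\frac{(k+N_n)!\,D_n!}{k!\,n!}\,R_n^{\,D_n-k}.$$ Let $\log\tilde f(t)=t-1-t\log t$ for $0\le t\le1$. Then $$\lim_{n\to\infty}\sup_{0\le k\le D_n}\Big|\frac{1}{D_n}\log\tilde f_{k,n}-\log\tilde f\big(\tfrac{k}{D_n}\big)\Big|=0.$$
   Context: $0\log0=0$. *)

(* Defs.v *)
From Stdlib Require Export Reals Arith Factorial.
Open Scope R_scope.

Definition logftilde (t : R) : R :=
  t - 1 - (if Req_EM_T t 0 then 0 else t * ln t).

Definition ftilde (N : nat -> nat) (k n : nat) : R :=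
  let D := (n - N n)%nat in
  INR (fact (k + N n)) * INR (fact D) / (INR (fact k) * INR (fact n))
    * (INR n / INR D) ^ (D - k).

Fixpoint supUpTo (g : nat -> R) (m : nat) : R :=
  match m with
  | O => g O
  | S m' => Rmax (supUpTo g m') (g (S m'))
  end.

Definition supErr (N : nat -> nat) (n : nat) : R :=
  let D := (n - N n)%nat in
  supUpTo (fun k => Rabs (/ INR D * ln (ftilde N k n) - logftilde (INR k / INR D))) D.

(* Main.v *)
Require Import Defs.
From Stdlib Require Import Reals Lra Lia.
Open Scope R_scope.

Lemma ln0 : ln 0 = 0.
Proof. unfold ln; destruct Rlt_dec as [r|r]; [exfalso; exact (Rlt_irrefl _ r)|reflexivity]. Qed.

Lemma ln_le' x y : 0 < x -> x <= y -> ln x <= ln y.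
Proof. intros H1 H2; destruct (Rle_lt_or_eq_dec _ _ H2) as [h|h].
 - left; apply ln_increasing; auto. - subst; lra. Qed.

Lemma ln_le_sub1 y : 0 < y -> ln y <= y - 1.
Proof. intros Hy. rewrite <- (exp_ln y Hy) at 2. set (z := ln y).
 destruct (Req_dec z 0) as [h|h]. rewrite h, exp_0; lra.
 pose proof (exp_ineq1 z h); lra. Qed.

Lemma ln_bounds a b : 0 < a -> a <= b -> (b-a)/b <= ln b - ln a <= (b-a)/a.
Proof. intros Ha Hab. assert (Hb : 0 < b) by lra. split.
 - assert (P : 0 < a * / b) by (apply Rmult_lt_0_compat; [lra| apply Rinv_0_lt_compat; lra]).
   pose proof (ln_le_sub1 (a * / b) P) as H.
   rewrite ln_mult, ln_Rinv in H; try apply Rinv_0_lt_compat; try lra.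
   assert (H2 : a * / b - 1 = - ((b - a)/b)) by (field; lra). lra.
 - assert (P : 0 < b * / a) by (apply Rmult_lt_0_compat; [lra| apply Rinv_0_lt_compat; lra]).
   pose proof (ln_le_sub1 (b * / a) P) as H.
   rewrite ln_mult, ln_Rinv in H; try apply Rinv_0_lt_compat; try lra.
   assert (H2 : b * / a - 1 = ((b - a)/a)) by (field; lra). lra. Qed.

Lemma INR_fact_pos m : 0 < INR (fact m).
Proof. apply lt_0_INR, lt_O_fact. Qed.

Lemma ln_fact_S m : ln (INR (fact (S m))) = ln (INR (S m)) + ln (INR (fact m)).
Proof. change (fact (S m)) with (S m * fact m)%nat. rewrite mult_INR, ln_mult.
 reflexivity. apply lt_0_INR; lia. apply INR_fact_pos. Qed.

Definition hh (m : nat) : R := ln (INR (fact m)) - INR m * ln (INR m) + INR m.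

Lemma hh_bounds m : 0 <= hh m <= 1 + ln (INR m).
Proof.
 induction m as [|m IH].
 - unfold hh; simpl. rewrite ln_1, ln0; lra.
 - destruct m as [|m].
   + unfold hh; simpl. rewrite ln_1. lra.
   + assert (E : hh (S (S m)) = hh (S m) + 1 - INR (S m) * (ln (INR (S (S m))) - ln (INR (S m)))).
     { unfold hh. rewrite ln_fact_S. rewrite (S_INR (S m)). ring. }
     rewrite E.
     assert (Hp : 0 < INR (S m)) by (apply lt_0_INR; lia).
     pose proof (ln_bounds (INR (S m)) (INR (S (S m))) Hp) as B.
     rewrite (S_INR (S m)) in *. specialize (B ltac:(lra)).
     replace (INR (S m) + 1 - INR (S m)) with 1 in B by ring.
     assert (B1 : INR (S m) * (1 / (INR (S m) + 1)) <= INR (S m) * (ln (INR (S m) + 1) - ln (INR (S m)))) by (apply Rmult_le_compat_l; lra).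
     assert (B2 : INR (S m) * (ln (INR (S m) + 1) - ln (INR (S m))) <= INR (S m) * (1 / INR (S m))) by (apply Rmult_le_compat_l; lra).
     assert (E1 : INR (S m) * (1 / INR (S m)) = 1) by (field; lra).
     assert (E2 : 1 - INR (S m) * (1 / (INR (S m) + 1)) = 1 / (INR (S m) + 1)) by (field; lra).
     lra.
Qed.

Lemma lnfact_diff a d : (1 <= a)%nat ->
  INR d * ln (INR a) <= ln (INR (fact (a+d))) - ln (INR (fact a)) <= INR d * ln (INR (a+d)).
Proof.
 intros Ha. induction d as [|d IH].
 - rewrite Nat.add_0_r. simpl. lra.
 - replace (a + S d)%nat with (S (a + d)) by lia. rewrite ln_fact_S.
   assert (L1 : ln (INR a) <= ln (INR (S (a+d)))) by (apply ln_le'; [apply lt_0_INR; lia| apply le_INR; lia]).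
   assert (L2 : ln (INR (a+d)) <= ln (INR (S (a+d)))) by (apply ln_le'; [apply lt_0_INR; lia| apply le_INR; lia]).
   assert (Hd : 0 <= INR d) by apply pos_INR.
   assert (L3 : INR d * ln (INR (a+d)) <= INR d * ln (INR (S (a+d)))) by (apply Rmult_le_compat_l; lra).
   rewrite S_INR. lra.
Qed.

Lemma supUpTo_bound g m B : (forall k, (k <= m)%nat -> 0 <= g k <= B) -> 0 <= supUpTo g m <= B.
Proof.
 induction m as [|m IH]; intros H; simpl.
 - apply H; lia.
 - assert (A1 := IH (fun k hk => H k ltac:(lia))). assert (A2 := H (S m) (le_n _)).
   split. apply Rle_trans with (supUpTo g m); [lra| apply Rmax_l].
   apply Rmax_lub; lra.
Qed.

Lemma iflemma k D : 0 < D -> 0 <= k ->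
  (if Req_EM_T (k/D) 0 then 0 else k/D * ln (k/D)) = (k*ln k - k*ln D)/D.
Proof.
 intros HD Hk. destruct (Req_EM_T (k/D) 0) as [e|e].
 - assert (k = 0). { replace k with (k/D * D) by (field; lra). rewrite e; ring. }
   subst. field; lra.
 - assert (k <> 0). { intro h; apply e; subst; unfold Rdiv; ring. }
   unfold Rdiv. rewrite ln_mult, ln_Rinv; try lra; try (apply Rinv_0_lt_compat; lra).
   all: try (field; lra).
Qed.

Ltac pos := repeat first [apply INR_fact_pos | apply Rmult_lt_0_compat | apply Rinv_0_lt_compat | apply pow_lt | (apply lt_0_INR; lia)].

Lemma pointwise (N : nat -> nat) n k : (N n <= n)%nat -> (1 <= N n)%nat -> (1 <= n - N n)%nat -> (k <= n - N n)%nat ->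
 Rabs (/ INR (n - N n) * ln (ftilde N k n) - logftilde (INR k / INR (n - N n)))
   <= (1 + ln (INR (n - N n)))/INR (n - N n) + (ln (INR n) - ln (INR (N n))).
Proof.
 intros h1 h2 h3 h4. unfold ftilde, logftilde. cbv zeta.
 remember (n - N n)%nat as D eqn:HD. remember (N n) as M eqn:HM.
 assert (HDp : 0 < INR D) by (apply lt_0_INR; lia).
 assert (HL : ln (INR (fact (k + M)) * INR (fact D) / (INR (fact k) * INR (fact n)) * (INR n / INR D) ^ (D - k))
   = ln (INR (fact (k + M))) + ln (INR (fact D)) - ln (INR (fact k)) - ln (INR (fact n))
     + INR (D - k) * (ln (INR n) - ln (INR D))).
 { unfold Rdiv. rewrite ln_mult by pos. rewrite ln_mult by pos. rewrite ln_Rinv by pos.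
   rewrite ln_mult by pos. rewrite ln_mult by pos. rewrite ln_pow by pos.
   rewrite ln_mult by pos. rewrite ln_Rinv by pos. ring. }
 rewrite HL; clear HL.
 rewrite iflemma; [| exact HDp | apply pos_INR].
 rewrite minus_INR by lia.
 assert (EB : ln (INR (fact D)) = hh D + INR D * ln (INR D) - INR D) by (unfold hh; ring).
 assert (EC : ln (INR (fact k)) = hh k + INR k * ln (INR k) - INR k) by (unfold hh; ring).
 rewrite EB, EC.
 set (T := ln (INR (fact (k + M))) - ln (INR (fact n)) + (INR D - INR k) * ln (INR n)).
 assert (Eerr : / INR D * (ln (INR (fact (k + M))) + (hh D + INR D * ln (INR D) - INR D) -
     (hh k + INR k * ln (INR k) - INR k) - ln (INR (fact n)) +
     (INR D - INR k) * (ln (INR n) - ln (INR D))) -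
     (INR k / INR D - 1 - (INR k * ln (INR k) - INR k * ln (INR D)) / INR D)
     = (T + hh D - hh k) / INR D) by (unfold T; field; lra).
 rewrite Eerr; clear Eerr.
 assert (Hn : n = ((k + M) + (D - k))%nat) by lia.
 pose proof (lnfact_diff (k + M) (D - k) ltac:(lia)) as FD.
 rewrite <- Hn in FD. rewrite minus_INR in FD by lia.
 assert (LM1 : ln (INR M) <= ln (INR (k + M))) by (apply ln_le'; [apply lt_0_INR; lia| apply le_INR; lia]).
 assert (LM2 : ln (INR (k + M)) <= ln (INR n)) by (apply ln_le'; [apply lt_0_INR; lia| apply le_INR; lia]).
 assert (Hk0 : 0 <= INR k) by apply pos_INR.
 assert (HkD : INR k <= INR D) by (apply le_INR; lia).
 assert (T0 : 0 <= T) by (unfold T; lra).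
 assert (T1 : T <= (INR D - INR k) * (ln (INR n) - ln (INR (k + M)))) by (unfold T; lra).
 assert (T2 : (INR D - INR k) * (ln (INR n) - ln (INR (k + M))) <= (INR D - INR k) * (ln (INR n) - ln (INR M)))
   by (apply Rmult_le_compat_l; lra).
 assert (T3 : (INR D - INR k) * (ln (INR n) - ln (INR M)) <= INR D * (ln (INR n) - ln (INR M))).
 { apply Rmult_le_compat_r; lra. }
 pose proof (hh_bounds D) as HB. pose proof (hh_bounds k) as HC.
 assert (Lk : ln (INR k) <= ln (INR D)).
 { destruct (Nat.eq_dec k 0) as [->|hk].
   - simpl. rewrite ln0. rewrite <- ln_1. apply ln_le'; [lra|]. apply (le_INR 1); lia.
   - apply ln_le'; [apply lt_0_INR; lia| exact HkD]. }
 set (Y := 1 + ln (INR D) + INR D * (ln (INR n) - ln (INR M))).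
 assert (EY : Y / INR D = (1 + ln (INR D)) / INR D + (ln (INR n) - ln (INR M))) by (unfold Y; field; lra).
 rewrite <- EY.
 assert (Hi : 0 <= / INR D) by (left; apply Rinv_0_lt_compat; lra).
 apply Rabs_le. unfold Rdiv. split.
 - replace (- (Y * / INR D)) with ((- Y) * / INR D) by ring.
   apply Rmult_le_compat_r; [exact Hi|]. unfold Y; lra.
 - apply Rmult_le_compat_r; [exact Hi|]. unfold Y; lra.
Qed.

Lemma lnD_small (D eps : R) : 0 < eps -> 16 / (eps * eps) < D -> (1 + ln D) / D < eps / 2.
Proof.
 intros He HD.
 assert (H16 : 0 < 16 / (eps * eps)) by (unfold Rdiv; apply Rmult_lt_0_compat; [lra| apply Rinv_0_lt_compat; nra]).
 assert (D0 : 0 < D) by lra.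
 set (s := sqrt D).
 assert (s0 : 0 < s) by (apply sqrt_lt_R0; lra).
 assert (ss : s * s = D) by (apply sqrt_sqrt; lra).
 assert (Hs : 4 / eps < s).
 { assert (E : 16 / (eps * eps) = Rsqr (4 / eps)) by (unfold Rsqr; field; lra).
   rewrite E in HD. apply sqrt_lt_1 in HD; [| apply Rle_0_sqr | lra].
   rewrite sqrt_Rsqr in HD; [exact HD|]. unfold Rdiv; left; apply Rmult_lt_0_compat; [lra| apply Rinv_0_lt_compat; lra]. }
 clearbody s.
 assert (Hes : 4 < eps * s).
 { apply Rmult_lt_compat_l with (r := eps) in Hs; [| exact He].
   replace (eps * (4 / eps)) with 4 in Hs by (field; lra). exact Hs. }
 assert (Lln : ln D <= 2 * (s - 1)).
 { rewrite <- ss. rewrite ln_mult by exact s0. pose proof (ln_le_sub1 s s0). lra. }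
 assert (K4 : 4 * s < eps * s * s) by (apply Rmult_lt_compat_r; lra).
 assert (K : 1 + ln D < eps / 2 * D) by (rewrite <- ss in Lln |- *; nra).
 apply Rmult_lt_compat_r with (r := / D) in K; [| apply Rinv_0_lt_compat; lra].
 replace (eps / 2 * D * / D) with (eps / 2) in K by (field; lra). exact K.
Qed.

Theorem mainTheorem10 (N : nat -> nat)
  (hN : forall n, (N n <= n)%nat)
  (hratio : Un_cv (fun n => INR (N n) / INR n) 1)
  (hD : cv_infty (fun n => INR (n - N n)%nat)) :
  Un_cv (supErr N) 0.
Proof.
 intros eps Heps.
 destruct (hratio (Rmin (1/2) (eps/4))) as [M1 HM1].
 { apply Rmin_pos; lra. }
 destruct (hD (16 / (eps * eps))) as [M2 HM2].
 exists (max M1 M2). intros n Hn.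
 specialize (HM1 n ltac:(lia)). specialize (HM2 n ltac:(lia)).
 unfold R_dist in *.
 set (r := INR (N n) / INR n) in HM1.
 assert (Hr1 : Rabs (r - 1) < 1/2) by (pose proof (Rmin_l (1/2) (eps/4)); lra).
 assert (Hr2 : Rabs (r - 1) < eps/4) by (pose proof (Rmin_r (1/2) (eps/4)); lra).
 apply Rabs_def2 in Hr1. apply Rabs_def2 in Hr2.
 assert (H16 : 0 < 16 / (eps * eps)) by (unfold Rdiv; apply Rmult_lt_0_compat; [lra| apply Rinv_0_lt_compat; nra]).
 assert (HD1 : (1 <= n - N n)%nat).
 { destruct (n - N n)%nat eqn:E. simpl in HM2; lra. lia. }
 assert (HN1 : (1 <= N n)%nat).
 { destruct (N n) eqn:E; [|lia]. exfalso. unfold r in Hr1. simpl in Hr1. unfold Rdiv in Hr1. lra. }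
 assert (Hnpos : 0 < INR n) by (apply lt_0_INR; lia).
 assert (HNpos : 0 < INR (N n)) by (apply lt_0_INR; lia).
 assert (r0 : 0 < r) by (unfold r; unfold Rdiv; apply Rmult_lt_0_compat; [lra| apply Rinv_0_lt_compat; lra]).
 assert (Elnr : ln (INR n) - ln (INR (N n)) = ln 1 - ln r).
 { unfold r, Rdiv. rewrite ln_mult, ln_Rinv, ln_1 by (try apply Rinv_0_lt_compat; lra). ring. }
 assert (Bln : ln (INR n) - ln (INR (N n)) < eps / 2).
 { assert (r1 : r <= 1).
   { unfold r, Rdiv. assert (INR (N n) <= INR n) by (apply le_INR; auto).
     replace 1 with (INR n * / INR n) by (field; lra).
     apply Rmult_le_compat_r; [left; apply Rinv_0_lt_compat; lra| lra]. }
   rewrite Elnr. pose proof (ln_bounds r 1 r0 ltac:(lra)) as [_ Hb].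
   assert (Ir : / r <= 2). { replace 2 with (/ (1/2)) by field. apply Rinv_le_contravar; lra. }
   assert (Hm : (1 - r) * / r <= (1 - r) * 2) by (apply Rmult_le_compat_l; lra).
   unfold Rdiv in Hb. lra. }
 pose proof (lnD_small _ _ Heps HM2) as BD.
 set (Bd := (1 + ln (INR (n - N n))) / INR (n - N n) + (ln (INR n) - ln (INR (N n)))).
 assert (HS : 0 <= supErr N n <= Bd).
 { unfold supErr. cbv zeta. apply supUpTo_bound. intros k hk. split. apply Rabs_pos.
   apply pointwise; auto. }
 rewrite Rminus_0_r, Rabs_pos_eq by lra. unfold Bd in HS. lra.
Qed.
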